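(* For all nonnegative integers $a,b,c$ (with $E$ taken to be $0$ whenever an argument is negative): $$2(a-b)E(a,b,c)+(a-b+c+1)E(a+1,b,c)+(a-b-c-1)E(a,b+1,c)=0,$$ $$2a\,E(a-1,b,c)+(a-b+c)E(a,b,c)+(c-a-b-1)E(a,b+1,c)=0,$$ $$(a-b)(a+b-c)E(a,b,c)+a(a-b-c-1)E(a-1,b,c)+b(a-b+c+1)E(a,b-1,c)=0,$$ $$(a-b+c+1)(a+b-c+1)E(a+1,b,c)+\big(3a^2+a-(2a+1)(b+c)-(b-c)^2\big)E(a,b,c)+2a(a-b-c-1)E(a-1,b,c)=0.$$
   Context: For nonnegative integers $n_1,\dots,n_S$, $E(n_1,\dots,n_S)$ denotes the number of block derangements: $S$ players hold $n_1,\dots,n_S$ distinct cards respectively; all $N=n_1+\dots+n_S$ cards are redealt so that player $j$ again receives exactly $n_j$ cards (only which cards each player gets matters); $E$ counts the deals in which no player receives any card he originally held. Equivalently, $E(n_1,\dots,n_S)$ is the coefficient of $x_1^{n_1}\cdots x_S^{n_S}$ in $\prod_{j=1}^S(x_1+\dots+x_S-x_j)^{n_j}$. By convention $E(0,\dots,0)=1$. *)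

(* Defs.v *)
From HB Require Import structures.
From mathcomp Require Import all_boot all_order all_algebra.
Set Implicit Arguments. Unset Strict Implicit. Unset Printing Implicit Defensive.
Import Order.TTheory GRing.Theory Num.Theory.

(* Players are 0..S-1 with S = size n; player j holds
   nth 0 n j cards.  The N = sumn n cards are numbered 0..N-1, the first
   n_0 held by player 0, the next n_1 by player 1, etc. *)
Definition owner (n : seq nat) (k : nat) : nat :=
  nth 0 (flatten [seq nseq (nth 0 n j) j | j <- iota 0 (size n)]) k.

Definition block_derangement (n : seq nat)
    (f : {ffun 'I_(sumn n) -> 'I_(size n)}) : bool :=
  [forall j : 'I_(size n), #|[set k | f k == j]| == nth 0 n j] &&
  [forall k : 'I_(sumn n), (val (f k) != owner n k)].

Definition E (n : seq nat) : nat := #|[set f : {ffun 'I_(sumn n) -> 'I_(size n)} | block_derangement f]|.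

Definition Ez (a b c : int) : int :=
  match a, b, c with
  | Posz a', Posz b', Posz c' => (E [:: a'; b'; c'])%:Z
  | _, _, _ => 0
  end.

(* Main.v *)
Require Import Defs.
From HB Require Import structures.
From mathcomp Require Import all_boot all_order all_algebra.
From mathcomp Require Import ring lra zify.
Import Order.TTheory GRing.Theory Num.Theory.
Local Open Scope ring_scope.

Definition rf (m : int) : rat := if m is Posz n then (n`!%:R)^-1 else 0.
Definition rfB := rf.
Fixpoint ffz (u : int) (k : nat) : rat :=
  if k is k'.+1 then (u - k'%:Z)%:~R * ffz u k' else 1.

Lemma rfS (m : int) : rf m = (m + 1)%:~R * rf (m + 1).
Proof.
case: m => [n|n].
  rewrite -[_ + 1]PoszD /= addn1 factS natrM invfM mulrA.
  idtac.
  rewrite -[(n.+1)%:~R]/(n.+1%:R).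
  by rewrite divff ?mul1r // pnatr_eq0.
case: n => [|n]; first by rewrite mul0r.
have -> : Negz n.+1 + 1 = Negz n by rewrite !NegzE; lia.
by rewrite /= mulr0.
Qed.

Lemma rf_to (m u : int) (k : nat) : u = m + k%:Z -> rf m = ffz u k * rfB u.
Proof.
elim: k m => [|k IH] m /=.
  by rewrite addr0 => ->; rewrite mul1r.
move=> hu; rewrite rfS (IH (m + 1)); last by rewrite hu; lia.
rewrite mulrA; congr (_ * _ * _); congr intr; rewrite hu; lia.
Qed.

Lemma rf_neg (n : nat) : rf (Negz n) = 0. Proof. by []. Qed.

Definition binz (n : nat) (m : int) : rat := n`!%:R * rf m * rf (n%:Z - m).
Definition tt (a b c : nat) (i : int) : rat :=
  binz c i * binz b (a%:Z - i) * binz a (b%:Z - c%:Z + i).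

Ltac trk m u := first [ rewrite (@rf_to m u 0); [|lia]
                      | rewrite (@rf_to m u 1); [|lia]
                      | rewrite (@rf_to m u 2); [|lia] ].
Ltac nrf u1 u2 u3 u4 u5 u6 :=
  repeat match goal with |- context[rf ?m] =>
    first [ trk m u1 | trk m u2 | trk m u3 | trk m u4 | trk m u5 | trk m u6 ] end.

Definition G1 (a b c : nat) (j : int) : rat :=
  let d : rat := a%:R - b%:R in
  (- d * j%:~R ^+ 2 + (d * (c%:R + 1 + d) - (a%:R + 1) * (c%:R + 1)) * j%:~R) *
  (a`!%:R * b`!%:R * c`!%:R * rf j * rf (c%:Z - j) * rf (a%:Z + 1 - j)
   * rf (b%:Z - a%:Z + j) * rf (b%:Z - c%:Z + j) * rf (a%:Z - b%:Z + c%:Z + 1 - j)).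

Lemma wz1 (a b c : nat) (j : int) :
  2 * (a%:R - b%:R) * tt a b c j + (a%:R - b%:R + c%:R + 1) * tt a.+1 b c j
  + (a%:R - b%:R - c%:R - 1) * tt a b.+1 c j = G1 a b c (j + 1) - G1 a b c j.
Proof.
rewrite /tt /binz /G1 !factS !natrM.
nrf (j + 1) (c%:Z - j) (a%:Z + 1 - j) (b%:Z - a%:Z + j + 1) (b%:Z - c%:Z + j + 1)
    (a%:Z - b%:Z + c%:Z + 1 - j).
rewrite /ffz.
ring.
Qed.

Definition G2 (a b c : nat) (j : int) : rat := - j%:~R * tt a.+1 b c j.

Lemma wz2 (a b c : nat) (j : int) :
  2 * (a%:R + 1) * tt a b c j + (a%:R + 1 - b%:R + c%:R) * tt a.+1 b c j
  + (c%:R - a%:R - 1 - b%:R - 1) * tt a.+1 b.+1 c j = G2 a b c (j + 1) - G2 a b c j.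
Proof.
rewrite /G2 /tt /binz !factS !natrM.
nrf (j + 1) (c%:Z - j) (a%:Z + 1 - j) (b%:Z - a%:Z + j) (b%:Z - c%:Z + j + 1)
    (a%:Z - b%:Z + c%:Z + 1 - j).
rewrite /ffz.
ring.
Qed.

Definition Ssum (a b c : nat) : rat := \sum_(i < c.+1) tt a b c i.

Lemma rf_cS (c : nat) (x : int) : x = c%:Z - (c.+1)%:Z -> rf x = 0.
Proof. by move=> ->; rewrite (_ : _ - _ = Negz 0) //; lia. Qed.

Lemma sum1 (a b c : nat) :
  2 * (a%:R - b%:R) * Ssum a b c + (a%:R - b%:R + c%:R + 1) * Ssum a.+1 b c
  + (a%:R - b%:R - c%:R - 1) * Ssum a b.+1 c = 0.
Proof.
rewrite /Ssum !mulr_sumr -!big_split /=.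
rewrite (eq_bigr (fun i : 'I_c.+1 => G1 a b c (i.+1)%:Z - G1 a b c i)); last first.
  by move=> i _; rewrite wz1; congr (G1 _ _ _ _ - _); lia.
rewrite -(big_mkord xpredT (fun i => G1 a b c (i.+1)%:Z - G1 a b c i)).
rewrite telescope_sumr // /G1 (@rf_cS c (c%:Z - c.+1%:Z)) //.
rewrite [(Posz 0)%:~R]/(0%:R) /=.
ring.
Qed.

Lemma sum2 (a b c : nat) :
  2 * (a%:R + 1) * Ssum a b c + (a%:R + 1 - b%:R + c%:R) * Ssum a.+1 b c
  + (c%:R - a%:R - 1 - b%:R - 1) * Ssum a.+1 b.+1 c = 0.
Proof.
rewrite /Ssum !mulr_sumr -!big_split /=.
rewrite (eq_bigr (fun i : 'I_c.+1 => G2 a b c (i.+1)%:Z - G2 a b c i)); last first.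
  by move=> i _; rewrite wz2; congr (G2 _ _ _ _ - _); lia.
rewrite -(big_mkord xpredT (fun i => G2 a b c (i.+1)%:Z - G2 a b c i)).
rewrite telescope_sumr // /G2 /tt /binz (@rf_cS c (c%:Z - c.+1%:Z)) //.
rewrite [(Posz 0)%:~R]/(0%:R) /=.
ring.
Qed.

Lemma rf_lt0 (x : int) : x < 0 -> rf x = 0.
Proof. by case: x => // n; rewrite ltNge; case/negP. Qed.

Lemma binzE (n m : nat) : binz n m = 'C(n, m)%:R.
Proof.
rewrite /binz; case: (leqP m n) => hmn.
  rewrite subzn // /= -(bin_fact hmn) !natrM.
  have h1 : (m`!%:R : rat) != 0 by rewrite pnatr_eq0 -lt0n fact_gt0.
  have h2 : ((n - m)`!%:R : rat) != 0 by rewrite pnatr_eq0 -lt0n fact_gt0.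
  by rewrite mulrA mulrAC mulfK // mulfK.
by rewrite (@rf_lt0 (n%:Z - m%:Z)) ?mulr0 ?bin_small //; lia.
Qed.

Lemma binz0 (x : int) : binz 0 x = (x == 0)%:R.
Proof.
case: x => [m|m]; last by rewrite /binz /= mulr0 mul0r.
by rewrite binzE; case: m.
Qed.

Lemma S0b (b c : nat) : Ssum 0 b c = (b == c)%:R.
Proof.
rewrite /Ssum -(big_mkord xpredT (fun i : nat => tt 0 b c i)) big_nat_recl //.
rewrite big1_seq ?addr0; last first.
  move=> i _; rewrite /tt /binz (@rf_lt0 (0%:Z - i.+1%:Z)); last by lia.
  by rewrite !(mulr0, mul0r).
rewrite /tt binzE bin0 mul1r.
rewrite (_ : (0%:Z - 0%:Z) = 0%:Z) // binzE bin0 mul1r.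
rewrite (_ : b%:Z - c%:Z + 0%:Z = b%:Z - c%:Z); last by rewrite addr0.
rewrite binz0 subr_eq0 eqz_nat //.
Qed.

Lemma Sa0 (a c : nat) : Ssum a 0 c = (a == c)%:R.
Proof.
rewrite /Ssum -(big_mkord xpredT (fun i : nat => tt a 0 c i)) big_nat_recr //=.
rewrite big1_seq ?add0r; last first.
  move=> i; rewrite mem_index_iota => /andP [_ hi].
  rewrite /tt /binz (@rf_lt0 (0%:Z - c%:Z + i%:Z)); last by lia.
  by rewrite !(mulr0, mul0r).
rewrite /tt binzE binn mul1r binz0.
rewrite (_ : 0%:Z - c%:Z + c%:Z = 0%:Z); last by lia.
rewrite binzE bin0 mulr1 subr_eq0 eqz_nat //.
Qed.

Lemma L2 (a b c : nat) :
  2 * a%:R * Ssum a.-1 b c + (a%:R - b%:R + c%:R) * Ssum a b c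
  + (c%:R - a%:R - b%:R - 1) * Ssum a b.+1 c = 0.
Proof.
case: a => [|a].
  rewrite !S0b mulr0 mul0r add0r.
  case: (eqVneq b c) => [->|hbc]; first by rewrite ?eqxx ?eqn_leq ?ltnn ?andbF ?andFb /=; ring.
  case: (eqVneq b.+1 c) => [<-|hbc2]; first by rewrite ?eqxx ?eqn_leq ?ltnn ?andbF ?andFb /=; ring.
  by rewrite mulr0 mulr0 addr0.
have := sum2 a b c; rewrite /= => h.
rewrite -{}h; ring.
Qed.

Lemma L3 (a b c : nat) :
  (a%:R - b%:R) * (a%:R + b%:R - c%:R) * Ssum a b c
  + a%:R * (a%:R - b%:R - c%:R - 1) * Ssum a.-1 b c
  + b%:R * (a%:R - b%:R + c%:R + 1) * Ssum a b.-1 c = 0.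
Proof.
case: a => [|a].
  rewrite !S0b /=.
  case: b => [|b]; first by ring.
  case: (eqVneq b.+1 c) => [<-|hbc]; first by rewrite ?eqxx ?eqn_leq ?ltnn ?andbF ?andFb /=; ring.
  case: (eqVneq b c) => [<-|hbc2]; first by rewrite ?eqxx ?eqn_leq ?ltnn ?andbF ?andFb /=; ring.
  by rewrite /=; ring.
case: b => [|b].
  rewrite !Sa0 /=.
  case: (eqVneq a.+1 c) => [<-|hbc]; first by rewrite ?eqxx ?eqn_leq ?ltnn ?andbF ?andFb /=; ring.
  case: (eqVneq a c) => [<-|hbc2]; first by rewrite ?eqxx ?eqn_leq ?ltnn ?andbF ?andFb /=; ring.
  by rewrite /=; ring.
have h1 := sum1 a b c; have h2 := sum2 a b c; rewrite /=.
idtac.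
transitivity (- ((a%:R - b%:R) * (2 * (a%:R + 1) * Ssum a b c + (a%:R + 1 - b%:R + c%:R) * Ssum a.+1 b c
  + (c%:R - a%:R - 1 - b%:R - 1) * Ssum a.+1 b.+1 c)
  - (a%:R + 1) * (2 * (a%:R - b%:R) * Ssum a b c + (a%:R - b%:R + c%:R + 1) * Ssum a.+1 b c
  + (a%:R - b%:R - c%:R - 1) * Ssum a b.+1 c))); first ring.
by rewrite h1 h2; ring.
Qed.

Lemma L4 (a b c : nat) :
  (a%:R - b%:R + c%:R + 1) * (a%:R + b%:R - c%:R + 1) * Ssum a.+1 b c
  + (3 * a%:R ^+ 2 + a%:R - (2 * a%:R + 1) * (b%:R + c%:R) - (b%:R - c%:R) ^+ 2) * Ssum a b c
  + 2 * a%:R * (a%:R - b%:R - c%:R - 1) * Ssum a.-1 b c = 0.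
Proof.
have h1 := sum1 a b c; have h2 := L2 a b c.
transitivity (- ((c%:R - a%:R - b%:R - 1) *
  (2 * (a%:R - b%:R) * Ssum a b c + (a%:R - b%:R + c%:R + 1) * Ssum a.+1 b c
  + (a%:R - b%:R - c%:R - 1) * Ssum a b.+1 c)
  - (a%:R - b%:R - c%:R - 1) *
  (2 * a%:R * Ssum a.-1 b c + (a%:R - b%:R + c%:R) * Ssum a b c
  + (c%:R - a%:R - b%:R - 1) * Ssum a b.+1 c))); first ring.
by rewrite h1 h2; ring.
Qed.

Lemma coefX1 (R : comNzRingType) (n k : nat) :
  ((1 + 'X : {poly R}) ^+ n)`_k = 'C(n, k)%:R.
Proof.
rewrite exprDn coef_sum.
under eq_bigr do rewrite expr1n mul1r coefMn coefXn.
case: (leqP k n) => hk.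
  have hk' : (k < n.+1)%N by [].
  rewrite (bigD1 (Ordinal hk')) //= eqxx big1 ?addr0 //.
  move=> i hi; rewrite eq_sym (_ : (i == k :> nat) = false) ?mul0rn //.
  apply/negbTE; apply: contra hi => /eqP hik; apply/eqP; exact: val_inj.
rewrite bin_small // big1 // => i _.
rewrite (_ : (k == i) = false) ?mul0rn //.
by apply/negbTE; rewrite neq_ltn (leq_trans (ltn_ord i)) ?orbT.
Qed.

Definition Sn (a b c : nat) : nat :=
  \sum_(i < c.+1) ((if (b < c - i)%N then 0 else 'C(a, b - (c - i))) *
                   (if (a < i)%N then 0 else 'C(b, a - i)) * 'C(c, i))%N.

Lemma SnS (a b c : nat) : (Sn a b c)%:R = Ssum a b c.
Proof.
rewrite /Sn /Ssum natr_sum; apply: eq_bigr => [[i hi]] _ /=.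
have e1 : ((if (a < i)%N then 0%N else 'C(b, a - i))%:R : rat) = binz b (a%:Z - i%:Z).
  case: (ltnP a i) => hai.
    by rewrite /binz (@rf_lt0 (a%:Z - i%:Z)) ?mulr0 ?mul0r //; lia.
  by rewrite (_ : a%:Z - i%:Z = (a - i)%N) ?binzE //; lia.
have e2 : ((if (b < c - i)%N then 0%N else 'C(a, b - (c - i)))%:R : rat)
   = binz a (b%:Z - c%:Z + i%:Z).
  case: (ltnP b (c - i)) => hbc.
    by rewrite /binz (@rf_lt0 (b%:Z - c%:Z + i%:Z)) ?mulr0 ?mul0r //; lia.
  by rewrite (_ : b%:Z - c%:Z + i%:Z = (b - (c - i))%N) ?binzE //; lia.
rewrite /tt !natrM binzE e1 e2; ring.
Qed.

Lemma coefP (a b c : nat) :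
  ((((1 + 'X) ^+ a)%:P * ((1 + 'X) ^+ b * (('X : {poly rat})%:P + 'X) ^+ c))`_a)`_b
  = (Sn a b c)%:R :> rat.
Proof.
rewrite coefCM (exprDn (('X : {poly rat})%:P) 'X c) mulr_sumr coef_sum.
under eq_bigr => i _ do rewrite mulrnAr coefMn -rmorphXn mulrCA coefCM coefMXn coefX1.
rewrite mulr_sumr coef_sum /Sn natr_sum; apply: eq_bigr => i _.
rewrite mulrnAr coefMn (_ : (if (a < i)%N then 0 else 'C(b, a - i)%:R)
   = (if (a < i)%N then 0%N else 'C(b, a - i))%:R); last by case: ifP.
rewrite mulr_natr mulrnAr coefMn coefMXn coefX1.
by case: ifP => _; case: ifP => _; rewrite !natrM; ring.
Qed.

Lemma ownE (a b c k : nat) : owner [:: a; b; c] k =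
  if (k < a)%N then 0%N else if (k < a + b)%N then 1%N
  else if (k < a + b + c)%N then 2%N else 0%N.
Proof.
rewrite /owner /= cats0 !nth_cat !size_nseq.
case: (ltnP k a) => h1; first by rewrite nth_nseq h1.
case: (ltnP (k - a) b) => h2.
  by rewrite nth_nseq h2 (_ : (k < a + b)%N = true) //; lia.
rewrite (_ : (k < a + b)%N = false); last by lia.
rewrite nth_nseq.
case: (ltnP (k - a - b) c) => h3.
  by rewrite (_ : (k < a + b + c)%N = true) //; lia.
by rewrite (_ : (k < a + b + c)%N = false) //; lia.
Qed.

Definition mP (j : nat) : {poly {poly rat}} := 'X ^+ (j == 0)%N * ('X%:P) ^+ (j == 1)%N.
Definition wP (a b c k j : nat) : {poly {poly rat}} :=
  if j == owner [:: a; b; c] k then 0 else mP j.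

Lemma coefXY (a b p q : nat) :
  ((('X ^+ p : {poly {poly rat}}) * ('X%:P) ^+ q)`_a)`_b = ((p == a) && (q == b))%:R.
Proof.
rewrite -rmorphXn mulrC coefCM coefXn eq_sym.
case: (p =P a) => [hp|hap] /=; last by rewrite mulr0 coef0.
by rewrite mulr1 coefXn eq_sym.
Qed.

Lemma perf (a b c : nat) (f : {ffun 'I_(sumn [:: a; b; c]) -> 'I_(size [:: a; b; c])}) :
  ((block_derangement f : nat)%:R : rat) = ((\prod_(k : 'I_(sumn [:: a; b; c])) wP a b c k (f k))`_a)`_b.
Proof.
pose cnt (j : nat) := (\sum_k (val (f k) == j : nat))%N.
have hcard : forall j, #|[set k | f k == j]| = cnt (val j).
  move=> j; rewrite -sum1dep_card big_mkcond /=; apply: eq_bigr => k _.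
  by rewrite val_eqE; case: (f k == j).
have hsum : (cnt 0 + cnt 1 + cnt 2 = a + (b + (c + 0)))%N.
  rewrite /cnt -!big_split /=.
  rewrite (eq_bigr (fun _ => 1%N)); last first.
    move=> k _; case: (f k) => [[|[|[|j]]] hj] //.
  by rewrite sum_nat_const card_ord muln1.
have hforall : [forall j, #|[set k | f k == j]| == nth 0%N [:: a; b; c] j]
     = (cnt 0 == a) && (cnt 1 == b).
  apply/forallP/andP.
    move=> H; split.
      by have := H ord0; rewrite hcard.
    by have := H (Ordinal (isT : (1 < 3)%N)); rewrite hcard.
  move=> [/eqP h0 /eqP h1] j; rewrite hcard.
  case: j => [[|[|[|j]]] hj] //=; try by apply/eqP.
  apply/eqP; move: hsum; rewrite h0 h1; move: (cnt 2) => x; lia.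
have hbd : block_derangement f = ((cnt 0 == a) && (cnt 1 == b))
     && [forall k, val (f k) != owner [:: a; b; c] k].
  by rewrite /block_derangement hforall.
rewrite hbd.
case: (boolP [forall k, val (f k) != owner [:: a; b; c] k]) => hd.
  rewrite andbT.
  rewrite (eq_bigr (fun k => mP (f k))); last first.
    by move=> k _; rewrite /wP (negbTE (forallP hd k)).
  by rewrite /mP big_split /= !prodrXr coefXY.
rewrite andbF.
move/forallPn: hd => [k]; rewrite negbK => hk.
by rewrite (bigD1 k) //= /wP hk mul0r coef0 coef0.
Qed.

Lemma prodE (a b c : nat) :
  \prod_(k : 'I_(sumn [:: a; b; c])) \sum_(j : 'I_(size [:: a; b; c])) wP a b c k j
  = ((1 + 'X) ^+ a)%:P * ((1 + 'X) ^+ b * (('X : {poly rat})%:P + 'X) ^+ c).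
Proof.
rewrite (eq_bigr (fun k : 'I_(sumn [:: a; b; c]) =>
   wP a b c k 0 + wP a b c k 1 + wP a b c k 2)); last first.
  move=> k _; rewrite !big_ord_recr big_ord0 /=; congr (_ + _ + _); apply: add0r.
have h1 : forall i, (0 <= i < a)%N ->
    wP a b c i 0 + wP a b c i 1 + wP a b c i 2 = 1 + ('X : {poly rat})%:P.
  move=> i /andP [_ hi]; rewrite /wP !ownE hi /mP /=; ring.
have h2 : forall i, (a <= i < a + b)%N ->
    wP a b c i 0 + wP a b c i 1 + wP a b c i 2 = 1 + 'X.
  move=> i /andP [hi1 hi2]; rewrite /wP !ownE (_ : (i < a)%N = false); last by lia.
  by rewrite hi2 /mP /=; ring.
have h3 : forall i, (a + b <= i < a + (b + (c + 0)))%N ->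
    wP a b c i 0 + wP a b c i 1 + wP a b c i 2 = ('X : {poly rat})%:P + 'X.
  move=> i /andP [hi1 hi2]; rewrite /wP !ownE (_ : (i < a)%N = false); last by lia.
  rewrite (_ : (i < a + b)%N = false); last by lia.
  rewrite (_ : (i < a + b + c)%N = true); last by lia.
  by rewrite /mP /=; ring.
rewrite -(big_mkord xpredT (fun i => wP a b c i 0 + wP a b c i 1 + wP a b c i 2)).
rewrite (@big_cat_nat _ _ _ a) //=; last by lia.
rewrite (@big_cat_nat _ _ _ (a + b) a) //=; [|lia|lia].
rewrite (eq_big_nat _ _ h1) (eq_big_nat _ _ h2) (eq_big_nat _ _ h3) !prodr_const_nat.
rewrite subn0 (_ : (a + b - a = b)%N); last by lia.
rewrite (_ : (a + (b + (c + 0)) - (a + b) = c)%N); last by lia.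
by rewrite rmorphXn rmorphD /= polyC1.
Qed.

Lemma Ecoef (a b c : nat) : ((E [:: a; b; c])%:R : rat) = Ssum a b c.
Proof.
rewrite -SnS -coefP -prodE.
rewrite (bigA_distr_bigA (fun (k : 'I_(sumn [:: a; b; c])) (j : 'I_(size [:: a; b; c])) => wP a b c k j)).
rewrite !coef_sum /E -sum1dep_card natr_sum big_mkcond /=.
apply: eq_bigr => f _; rewrite -(@perf a b c f).
by case: (@block_derangement [:: a; b; c] f).
Qed.

Lemma EzS (a b c : nat) : ((Ez a b c)%:~R : rat) = Ssum a b c.
Proof. exact: Ecoef. Qed.

Lemma toQ (x : int) : (x%:~R : rat) = 0 -> x = 0.
Proof. by move/eqP; rewrite intr_eq0 => /eqP. Qed.

Lemma Zs1 (a : nat) : a%:Z + 1 = (a.+1)%:Z. Proof. lia. Qed.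
Lemma Zm1 (a : nat) : (a.+1)%:Z - 1 = a%:Z. Proof. lia. Qed.

Lemma EzN1a (b c : int) : Ez (Posz 0 - 1) b c = 0. Proof. by []. Qed.
Lemma EzN1b (a : nat) (c : int) : Ez a (Posz 0 - 1) c = 0. Proof. by []. Qed.

Theorem mainTheorem7 (a b c : nat) :
  let A : int := a%:Z in let B : int := b%:Z in let C : int := c%:Z in
  [/\ 2 * (A - B) * Ez A B C + (A - B + C + 1) * Ez (A + 1) B C
        + (A - B - C - 1) * Ez A (B + 1) C = 0,
      2 * A * Ez (A - 1) B C + (A - B + C) * Ez A B C
        + (C - A - B - 1) * Ez A (B + 1) C = 0,
      (A - B) * (A + B - C) * Ez A B C + A * (A - B - C - 1) * Ez (A - 1) B C
        + B * (A - B + C + 1) * Ez A (B - 1) C = 0 &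
      (A - B + C + 1) * (A + B - C + 1) * Ez (A + 1) B C
        + (3 * A ^+ 2 + A - (2 * A + 1) * (B + C) - (B - C) ^+ 2) * Ez A B C
        + 2 * A * (A - B - C - 1) * Ez (A - 1) B C = 0].
Proof.
move=> A B C; rewrite /A /B /C {A B C} !Zs1.
split.
- apply: toQ; rewrite -(sum1 a b c) -!EzS; ring.
- apply: toQ; rewrite -(L2 a b c) -!EzS.
  case: a => [|a]; first by rewrite /=; ring.
  rewrite Zm1 /=; ring.
- apply: toQ; rewrite -(L3 a b c).
  case: a => [|a]; case: b => [|b]; rewrite ?Zm1 ?EzN1a ?EzN1b -!EzS; ring.
- apply: toQ; rewrite -(L4 a b c) -!EzS.
  case: a => [|a]; first by rewrite /=; ring.
  rewrite Zm1 /=; ring.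
Qed.
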